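(* Let $V$ be a verifier with randomness complexity $r(n)=O(\log n)$ and query complexity $q(n)=O(1)$, let $x\in\{0,1\}^n$, and let $\pi^{\mathsf{start}}(x),\pi^{\mathsf{goal}}(x)\in\{0,1\}^{\mathrm{poly}(n)}$ be two proofs that $V(x)$ accepts with probability $1$. Then there always exists a reconfiguration sequence $(\pi^{(1)},\ldots,\pi^{(T)})$ from $\pi^{\mathsf{start}}(x)$ to $\pi^{\mathsf{goal}}(x)$ over $\{0,1\}^{\mathrm{poly}(n)}$ such that \[\Pr_{t\sim\{1,\ldots,T\},\,(I,D)\sim V(x)}\bigl[D(\pi^{(t)}|_I)=1\bigr] > 1-\frac{1}{2^{\Omega(n)}},\] where $t$ is uniform and independent of the random bits of $V$.
   Context: A verifier with randomness complexity $r$ and query complexity $q$ is a probabilistic polynomial-time algorithm $V$ that, on input $x$, tosses $r(|x|)$ random bits and generates from them a tuple of $q(|x|)$ positions $I$ and a circuit $D\colon\{0,1\}^{q}\to\{0,1\}$; $(I,D)\sim V(x)$ denotes this random pair, and $V$ accepts proof $\pi$ (for a given choice of randomness) when $D(\pi|_I)=1$, $\pi|_I$ being the restriction of $\pi$ to positions $I$. A reconfiguration sequence from $\pi^{\mathsf{start}}$ to $\pi^{\mathsf{goal}}$ over $\{0,1\}^m$ is a finite sequence of strings in $\{0,1\}^m$ starting at $\pi^{\mathsf{start}}$, ending at $\pi^{\mathsf{goal}}$, with consecutive strings differing in at most one bit. *)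

(* Defs.v *)
From mathcomp Require Import all_boot all_order all_algebra.
Set Implicit Arguments. Unset Strict Implicit. Unset Printing Implicit Defensive.
Import Order.TTheory GRing.Theory Num.Theory.
Local Open Scope ring_scope.

(* A (nonadaptive) verifier: on input x in {0,1}^n, with proof length plen n,
   it tosses rc n random bits and from them generates a tuple of qc n
   positions I (in 'I_(plen n)) and a decision predicate D on {0,1}^(qc n). *)
Record verifier := Verifier {
  rc : nat -> nat;
  qc : nat -> nat;
  plen : nat -> nat;
  vquery : forall n : nat, n.-tuple bool -> (rc n).-tuple bool ->
             ((qc n).-tuple 'I_(plen n) * {ffun (qc n).-tuple bool -> bool})%type
}.

Definition restrict (m q : nat) (pi : m.-tuple bool) (I : q.-tuple 'I_m)
  : q.-tuple bool := [tuple of map (fun i => tnth pi i) I].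

Definition accepts (V : verifier) (n : nat) (x : n.-tuple bool)
  (pi : (plen V n).-tuple bool) (rho : (rc V n).-tuple bool) : bool :=
  let p := @vquery V n x rho in p.2 (restrict pi p.1).

Definition acc_prob (V : verifier) (n : nat) (x : n.-tuple bool)
  (pi : (plen V n).-tuple bool) : rat :=
  (#|[set rho : (rc V n).-tuple bool | @accepts V n x pi rho]|)%:R
  / (2 ^ rc V n)%:R.

Definition hdist (m : nat) (a b : m.-tuple bool) : nat :=
  #|[set i : 'I_m | tnth a i != tnth b i]|.

Definition reconf_seq (m : nat) (a b : m.-tuple bool) (s : seq (m.-tuple bool))
  : bool :=
  if s is h :: t then
    [&& h == a, last h t == b & path (fun u v => hdist u v <= 1)%N h t]
  else false.

Definition avg_acc (V : verifier) (n : nat) (x : n.-tuple bool)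
  (s : seq ((plen V n).-tuple bool)) : rat :=
  (\sum_(t < size s) @acc_prob V n x (nth (nth [tuple of nseq _ false] s 0) s t))
  / (size s)%:R.

Arguments accepts V {n} x pi rho.
Arguments acc_prob V {n} x pi.
Arguments avg_acc V {n} x s.

(* Main.v *)
Require Import Defs.
From mathcomp Require Import all_boot all_order all_algebra.
From mathcomp Require Import ring lra.
Import Order.TTheory GRing.Theory Num.Theory.
Local Open Scope ring_scope.

Section S.
Variables (m : nat) (a b : m.-tuple bool).
Definition uu (k : nat) : m.-tuple bool :=
  [tuple (if (i < k)%N then tnth b i else tnth a i) | i < m].

Lemma uu0 : uu 0 = a.
Proof. apply: eq_from_tnth => i; by rewrite tnth_mktuple. Qed.
Lemma uum : uu m = b.
Proof. apply: eq_from_tnth => i; by rewrite tnth_mktuple ltn_ord. Qed.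

Lemma uu_step k j : (j == k) || (j == k.+1) -> (hdist (uu k) (uu j) <= 1)%N.
Proof.
case/orP => /eqP ->.
  rewrite /hdist; apply/card_le1_eqP => i i2; by rewrite !inE eqxx.
rewrite /hdist; apply/card_le1_eqP => i i2; rewrite !inE !tnth_mktuple.
have H : forall l : 'I_m, (if (l < k)%N then tnth b l else tnth a l) !=
         (if (l < k.+1)%N then tnth b l else tnth a l) -> val l = k.
  move=> l; case: (ltngtP l k) => [lt|gt|eq] //.
    by rewrite ifT ?eqxx //; apply: leqW.
  by rewrite ifF ?eqxx // ltnNge gt.
by move=> /H Hi /H Hj; apply: val_inj; rewrite Hi Hj.
Qed.
End S.

Lemma path_nseq (T : Type) (R : rel T) x M : R x x -> path R x (nseq M x).
Proof. by move=> Rx; elim: M => //= M ->; rewrite Rx. Qed.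

Lemma path_iotaS (R : rel nat) x m : (forall k, R k k.+1) -> path R x (iota x.+1 m).
Proof. by move=> HR; elim: m x => //= m IH x; rewrite HR IH. Qed.

Lemma last_iotaS x m : last x (iota x.+1 m) = (x + m)%N.
Proof. elim: m x => [|m IH] x /=; first by rewrite addn0. by rewrite IH addnS. Qed.

Lemma iter_one (M : nat) : iter M (fun y : rat => 1 + y) 0 = M%:R.
Proof. elim: M => //= M ->. by rewrite -[M.+1]addn1 natrD addrC. Qed.

Lemma last_nseq0 M : last 0%N (nseq M 0%N) = 0%N.
Proof. by elim: M. Qed.

Lemma acc_ge0 V n (x : n.-tuple bool) p : 0 <= acc_prob V x p.
Proof. by rewrite /acc_prob divr_ge0 ?ler0n. Qed.

Lemma key (p mm R : rat) : 0 < p -> 0 <= mm -> 0 <= R ->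
  1 - 1 / p < (mm * p + 1 + R) / (1 + (mm * p + mm)).
Proof.
move=> p0 m0 R0.
have d0 : 0 < 1 + (mm * p + mm) by have := mulr_ge0 m0 (ltW p0); lra.
rewrite ltr_pdivlMr //.
have e : (1 - 1/p) * (1 + (mm * p + mm)) = 1 + mm * p - (1 + mm) / p.
  by field; rewrite gt_eqF.
rewrite e; have : 0 < (1 + mm) / p by rewrite divr_gt0 //; lra.
lra.
Qed.

Theorem mainTheorem5 (V : verifier) :
  (exists C N0 : nat, forall n : nat, (N0 <= n)%N ->
      (rc V n <= C * trunc_log 2 n)%N) ->
  (exists Q : nat, forall n : nat, (qc V n <= Q)%N) ->
  (exists k : nat, forall n : nat, (plen V n <= n ^ k + k)%N) ->
  exists e : nat -> nat,
    (exists (c : rat) (N1 : nat), 0 < c /\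
       forall n : nat, (N1 <= n)%N -> c * n%:R <= (e n)%:R) /\
    forall (n : nat) (x : n.-tuple bool)
           (pi_start pi_goal : (plen V n).-tuple bool),
      acc_prob V x pi_start = 1 ->
      acc_prob V x pi_goal = 1 ->
      exists s : seq ((plen V n).-tuple bool),
        reconf_seq pi_start pi_goal s /\
        avg_acc V x s > 1 - 1 / (2 ^ e n)%:R.
Proof.
move=> _ _ _; exists (fun n => n); split.
  by exists 1, 0%N; split => // n _; rewrite mul1r.
move=> n x a b Ha Hb.
set m := plen V n.
set M := (m * 2 ^ n)%N.
set u := uu m a b.
exists (u 0%N :: map u (nseq M 0%N ++ iota 1 m)); split.
  rewrite /reconf_seq last_map last_cat last_nseq0 last_iotaS add0n /u uu0 uum !eqxx /=.
  rewrite -[X in path _ X _](uu0 m a b) path_map cat_path path_nseq /=; last by rewrite /u (@uu_step _ _ _ 0%N 0%N) // eqxx.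
  rewrite last_nseq0; apply: path_iotaS => k /=.
  by apply: uu_step; rewrite eqxx orbT.
rewrite /avg_acc.
set s := _ :: _.
have -> : \sum_(t < size s) acc_prob V x (nth (nth [tuple of nseq _ false] s 0) s t)
   = \sum_(y <- s) acc_prob V x y.
  by rewrite (big_nth (nth [tuple of nseq _ false] s 0)) big_mkord.
rewrite /s big_cons big_map big_cat big_nseq /= size_map size_cat size_nseq size_iota.
rewrite /u uu0 Ha.
rewrite iter_one.
have R0 : 0 <= \sum_(i <- iota 1 m) acc_prob V x (uu m a b i).
  by apply: sumr_ge0 => i _; apply: acc_ge0.
move: R0; set R := \sum_(_ <- _) _ => R0.
have -> : (1 + (M%:R + R)) / (M + m).+1%:R =
   (m%:R * (2 ^ n)%:R + 1 + R) / (1 + (m%:R * (2 ^ n)%:R + m%:R)) :> rat.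
  rewrite /M -[(m * 2 ^ n + m).+1]addn1 !natrD natrM; congr (_ / _); ring.
apply: key => //; by rewrite ?ler0n ?ltr0n ?expn_gt0.
Qed.
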